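(* Let $\mathcal A_1'=\mathrm{MSG}(\mathcal S_1)\setminus\{a_n\}$, for $s\in\mathbb N$ let $\mathrm{Ap}_1^{(s)}=\mathrm{Ap}_1\cap s\mathcal A_1'$, and let $N=\max\{s\in\mathbb N:\mathrm{Ap}_1^{(s)}\ne\emptyset\}$. Then $(\mathrm{Ap}_1,\le_1)$ is graded if and only if $\sum_{s=0}^{N}|\mathrm{Ap}_1^{(s)}|=d$.
   Context: Let $d\ge 1$ and $0<a_1<\dots<a_n=d$ integers with $\gcd(a_1,\dots,a_n)=1$. Let $\mathcal S_1\subseteq\mathbb N$ be the numerical semigroup generated by $a_1,\dots,a_n$ and $\mathrm{MSG}(\mathcal S_1)$ its minimal system of generators. Partial order: $y\le_1 z$ iff $z-y\in\mathcal S_1$. $\mathrm{Ap}_1=\{y\in\mathcal S_1:y-d\notin\mathcal S_1\}$ with induced order (it has exactly $d$ elements). For a finite set $A\subset\mathbb N$ and $s\ge1$, $sA=\{b_1+\dots+b_s: b_j\in A\}$, and $0A=\{0\}$. A finite poset is graded if there is $\rho:P\to\mathbb N$ with $\rho(z)=\rho(y)+1$ whenever $z$ covers $y$ (i.e. $y<z$ with nothing strictly between). *)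

(* Defs.v *)
From mathcomp Require Import all_boot.
Set Implicit Arguments. Unset Strict Implicit. Unset Printing Implicit Defensive.

(* The generators a_1 < ... < a_n are given as a sequence [a] of naturals. *)

Definition inS (a : seq nat) (x : nat) : Prop :=
  exists c : seq nat, size c = size a /\
    x = \sum_(i < size a) nth 0 c i * nth 0 a i.

Definition le1 (a : seq nat) (y z : nat) : Prop := y <= z /\ inS a (z - y).

Definition inMSG (a : seq nat) (x : nat) : Prop :=
  inS a x /\ 0 < x /\
  ~ (exists y z, 0 < y /\ 0 < z /\ inS a y /\ inS a z /\ x = y + z).

Definition Ap1 (a : seq nat) (d : nat) (y : nat) : Prop :=
  inS a y /\ ~ (d <= y /\ inS a (y - d)).

Definition A1' (a : seq nat) (d : nat) (x : nat) : Prop := inMSG a x /\ x <> d.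

Definition sumset (A : nat -> Prop) (s : nat) (x : nat) : Prop :=
  exists l : seq nat, size l = s /\ (forall b, b \in l -> A b) /\ sumn l = x.

Definition Ap1s (a : seq nat) (d s : nat) (x : nat) : Prop :=
  Ap1 a d x /\ sumset (A1' a d) s x.

Definition has_card (P : nat -> Prop) (k : nat) : Prop :=
  exists l : seq nat, uniq l /\ (forall x, P x <-> x \in l) /\ size l = k.

Definition covers (P : nat -> Prop) (le : nat -> nat -> Prop) (y z : nat) : Prop :=
  P y /\ P z /\ le y z /\ y <> z /\
  ~ (exists w, P w /\ le y w /\ le w z /\ w <> y /\ w <> z).

Definition graded (P : nat -> Prop) (le : nat -> nat -> Prop) : Prop :=
  exists rho : nat -> nat, forall y z, covers P le y z -> rho z = (rho y).+1.

Definition isMaxLevel (a : seq nat) (d N : nat) : Prop :=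
  (exists x, Ap1s a d N x) /\ (forall s, (exists x, Ap1s a d s x) -> s <= N).

(* Main.v *)
Require Import Defs.
From mathcomp Require Import all_boot.
From mathcomp Require Import zify.
From Stdlib Require Import Classical ClassicalEpsilon.
Set Implicit Arguments. Unset Strict Implicit. Unset Printing Implicit Defensive.

Lemma inS_f a x : inS a x <-> exists f : nat -> nat, x = \sum_(i < size a) f i * nth 0 a i.
Proof.
split.
  by move=> [c [_ ->]]; exists (fun i => nth 0 c i).
move=> [f ->]; exists (mkseq f (size a)); rewrite size_mkseq; split => //.
by apply: eq_bigr => i _; rewrite nth_mkseq.
Qed.

Lemma inS0 a : inS a 0.
Proof. by apply/inS_f; exists (fun _ => 0); rewrite big1. Qed.

Lemma inSD a x y : inS a x -> inS a y -> inS a (x + y).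
Proof.
move=> /inS_f [f ->] /inS_f [g ->]; apply/inS_f; exists (fun i => f i + g i).
by rewrite -big_split; apply: eq_bigr => i _; rewrite mulnDl.
Qed.

Lemma inS_mem a m c : c \in a -> inS a (m * c).
Proof.
move=> ca; apply/inS_f; exists (fun i => if i == index c a then m else 0).
have ic : index c a < size a by rewrite index_mem.
rewrite (bigD1 (Ordinal ic)) //= eqxx nth_index // big1 ?addn0 //.
move=> i Hi; case: eqP => // Heq; have Ei : i = Ordinal ic by apply/val_inj. by rewrite Ei eqxx in Hi.
Qed.

Lemma inS_sumn a (P : nat -> Prop) l : (forall b, P b -> inS a b) ->
  (forall b, b \in l -> P b) -> inS a (sumn l).
Proof.
move=> HP; elim: l => [|b l IH] Hl /=; first exact: inS0.
apply: inSD; first by apply: HP; apply: Hl; rewrite inE eqxx.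
by apply: IH => c cl; apply: Hl; rewrite inE cl orbT.
Qed.

Lemma inMSG_S a x : inMSG a x -> inS a x.
Proof. by case. Qed.

Lemma A1'_S a d x : A1' a d x -> inS a x.
Proof. by case=> [[]]. Qed.

Lemma Ap_down a d y z : inS a y -> Ap1 a d z -> y <= z -> inS a (z - y) -> Ap1 a d y.
Proof.
move=> Sy [Sz Hz] yz Szy; split => // [[dy Syd]]; apply: Hz; split; first lia.
have -> : z - d = (z - y) + (y - d) by lia.
exact: inSD.
Qed.

Lemma covers_char a d y z : covers (Ap1 a d) (le1 a) y z <->
  Ap1 a d y /\ Ap1 a d z /\ y <= z /\ inMSG a (z - y).
Proof.
split.
  move=> [Ay [Az [[yz Szy] [nyz Hw]]]]; do 3 split => //.
  split => //; split; first lia.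
  move=> [u [v [u0 [v0 [Su [Sv E]]]]]]; apply: Hw; exists (y + u).
  have Sw : inS a (y + u) by apply: inSD => //; case: Ay.
  split; first by apply: (Ap_down Sw Az); [lia | have -> : z - (y + u) = v by lia].
  split; first by split; [lia | rewrite addKn].
  split; first by split; [lia | have -> : z - (y + u) = v by lia].
  split; lia.
move=> [Ay [Az [yz [Szy [zy0 Hd]]]]]; do 2 split => //; split; first by [].
split; first lia.
move=> [w [Aw [[yw Swy] [[wz Szw] [wy wz']]]]]; apply: Hd.
exists (w - y), (z - w); do 4 (split; first (try lia; done)); lia.
Qed.

Lemma fact_MSG a x : inS a x -> exists l, (forall b, b \in l -> inMSG a b) /\ sumn l = x.
Proof.
elim/ltn_ind: x => x IH Sx.
case: (posnP x) => [->|x0]; first by exists [::].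
case: (classic (inMSG a x)) => Hm.
  exists [:: x]; split; last by rewrite /= addn0.
  by move=> b; rewrite inE => /eqP ->.
have [y [z [y0 [z0 [Sy [Sz E]]]]]] : exists y z, 0 < y /\ 0 < z /\ inS a y /\ inS a z /\ x = y + z.
  by apply: NNPP => H; apply: Hm.
have [|ly [Hly Ey]] := IH y _ Sy; first lia.
have [|lz [Hlz Ez]] := IH z _ Sz; first lia.
exists (ly ++ lz); split; last by rewrite sumn_cat Ey Ez.
by move=> b; rewrite mem_cat => /orP [/Hly|/Hlz].
Qed.

Lemma Ap_level a d x : Ap1 a d x -> exists l,
  (forall b, b \in l -> A1' a d b) /\ sumn l = x.
Proof.
move=> [Sx Hx]; have [l [Hl El]] := fact_MSG Sx.
exists l; split => // b bl; split; first exact: Hl.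
move=> bd; subst b; apply: Hx.
have E := perm_sumn (perm_to_rem bl); rewrite /= El in E.
split; first lia.
have -> : x - d = sumn (rem d l) by lia.
apply: (inS_sumn (@inMSG_S a)) => b /mem_rem; exact: Hl.
Qed.
Lemma rank_level a d (rho : nat -> nat)
  (Hr : forall y z, covers (Ap1 a d) (le1 a) y z -> rho z = (rho y).+1) :
  forall l x, Ap1 a d x -> (forall b, b \in l -> A1' a d b) -> sumn l = x ->
  rho x = rho 0 + size l.
Proof.
elim=> [|g l IH] x Ax Hl El /=; first by rewrite -El addn0.
rewrite /= in El.
have Hg : A1' a d g by apply: Hl; rewrite inE eqxx.
have Hl' : forall b, b \in l -> A1' a d b by move=> b bl; apply: Hl; rewrite inE bl orbT.
have Sy : inS a (sumn l) by apply: (inS_sumn (@A1'_S a d)).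
have Ay : Ap1 a d (sumn l).
  apply: (Ap_down Sy Ax); first lia.
  have -> : x - sumn l = g by lia.
  exact: A1'_S Hg.
rewrite (Hr (sumn l) x); last first.
  apply/covers_char; split => //; split => //; split; first lia.
  have -> : x - sumn l = g by lia.
  by case: Hg.
by rewrite (IH _ Ay Hl' erefl) addnS.
Qed.

Lemma graded_unique a d : graded (Ap1 a d) (le1 a) ->
  forall x s t, Ap1s a d s x -> Ap1s a d t x -> s = t.
Proof.
move=> [rho Hr] x s t [Ax [l1 [<- [H1 E1]]]] [_ [l2 [<- [H2 E2]]]].
have := rank_level Hr Ax H1 E1; rewrite (rank_level Hr Ax H2 E2).
by move/eqP; rewrite eqn_add2l => /eqP.
Qed.

Definition lvl a d x : nat :=
  match excluded_middle_informative (exists s, Ap1s a d s x) with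
  | left H => proj1_sig (constructive_indefinite_description _ H)
  | right _ => 0 end.

Lemma lvl_spec a d x s :
  (forall x s t, Ap1s a d s x -> Ap1s a d t x -> s = t) ->
  Ap1s a d s x -> lvl a d x = s.
Proof.
move=> U Hs; rewrite /lvl; case: excluded_middle_informative => [H|[]]; last by exists s.
case: constructive_indefinite_description => t Ht /=; exact: U Ht Hs.
Qed.

Lemma unique_graded a d :
  (forall x s t, Ap1s a d s x -> Ap1s a d t x -> s = t) -> graded (Ap1 a d) (le1 a).
Proof.
move=> U; exists (lvl a d) => y z /covers_char [Ay [Az [yz Mg]]].
have [l [Hl El]] := Ap_level Ay.
have gd : z - y <> d.
  move=> E; case: Az => _ []; split; first lia.
  have -> : z - d = y by lia.
  by case: Ay.
rewrite (@lvl_spec a d y (size l) U); last by split => //; exists l.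
apply: (@lvl_spec a d z (size l).+1 U); split => //; exists (z - y :: l); split => //; split.
  by move=> b; rewrite inE => /orP [/eqP ->|/Hl].
rewrite /= El; lia.
Qed.
Lemma foldr_gcd (b : seq nat) d : foldr gcdn d b = gcdn (\big[gcdn/0]_(x <- b) x) d.
Proof. by elim: b => [|c b IH] /=; rewrite ?big_nil ?gcd0n // big_cons IH gcdnA. Qed.

Lemma res_gen a d b : 0 < d -> {subset b <= a} ->
  forall k, exists x, inS a x /\ x = k * foldr gcdn d b %[mod d].
Proof.
move=> d0; elim: b => [|c b IH] Hb k /=.
  by exists 0; split; [exact: inS0 | rewrite modnMl mod0n].
have IH' := IH (fun z zb => Hb z (mem_behead (s := c :: b) zb)).
have ca : c \in a by apply: Hb; rewrite inE eqxx.
set g := foldr gcdn d b.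
case: (posnP c) => [->|c0]; first by rewrite gcd0n; exact: IH'.
case: (egcdnP g c0) => u v E _.
have [y [Sy Ey]] := IH' (k * v * (d - 1)).
exists (k * u * c + y); split; first by apply: inSD => //; exact: inS_mem.
apply/eqP; rewrite -(eqn_modDr (k * v * g)); apply/eqP.
have Hy : (y + k * v * g) %% d = 0.
  rewrite -modnDml Ey modnDml.
  have -> : k * v * (d - 1) * g + k * v * g = (k * v * g) * d.
    by clearbody g; clear -d0; case: d d0 => // d' _; rewrite subn1 /=; lia.
  by rewrite modnMl.
rewrite -addnA -modnDmr Hy addn0.
have -> : k * gcdn c g + k * v * g = k * u * c.
  by rewrite -!mulnA E mulnDr addnC.
done.
Qed.

Lemma d_in_a a d : a != [::] -> last 0 a = d -> d \in a.
Proof. by case: a => // x a _ <-; exact: mem_last. Qed.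

Lemma Ap_enum a d : 0 < d -> d \in a -> \big[gcdn/0]_(x <- a) x = 1 ->
  exists L, uniq L /\ (forall x, Ap1 a d x <-> x \in L) /\ size L = d.
Proof.
move=> d0 da Hg.
have G1 : foldr gcdn d a = 1 by rewrite foldr_gcd Hg gcd1n.
pose P r := fun x => if excluded_middle_informative (inS a x /\ x %% d = r %% d) then true else false.
have PP r x : P r x <-> inS a x /\ x %% d = r %% d.
  by rewrite /P; case: excluded_middle_informative.
have ex r : exists x, P r x.
  have [x [Sx Ex]] := res_gen d0 (fun z (h : z \in a) => h) r.
  by exists x; apply/PP; rewrite Ex G1 muln1.
pose m r := ex_minn (ex r).
have Pm r : inS a (m r) /\ m r %% d = r %% d.
  by apply/PP; rewrite /m; case: ex_minnP.
have minm r x : P r x -> m r <= x.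
  by rewrite /m; case: ex_minnP => n _ H /H.
exists [seq m r | r <- iota 0 d]; split.
  rewrite map_inj_in_uniq ?iota_uniq // => r1 r2; rewrite !mem_iota /= => h1 h2 E.
  have := (Pm r1).2; rewrite E (Pm r2).2 !modn_small //; lia.
split; last by rewrite size_map size_iota.
move=> x; split.
  move=> [Sx Hx]; set r := x %% d.
  have mx : m r <= x by apply: minm; apply/PP; rewrite modn_mod.
  have : x == m r %[mod d] by rewrite (Pm r).2 modn_mod.
  rewrite eqn_mod_dvd // => /dvdnP [q Eq].
  case: q Eq => [|q] Eq.
    have -> : x = m r by lia.
    by apply: map_f; rewrite mem_iota /= add0n ltn_pmod.
  exfalso; apply: Hx; rewrite mulSn in Eq; split; first lia.
  have -> : x - d = m r + q * d by lia.
  by apply: inSD; [exact: (Pm r).1 | exact: inS_mem].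
move=> /mapP [r _ ->]; split; first exact: (Pm r).1.
move=> [dm Sm].
have : m r <= m r - d.
  apply: minm; apply/PP; split => //.
  by rewrite -(Pm r).2 -(modnDr (m r - d)) subnK.
lia.
Qed.
Lemma sum_ge_size (L : seq nat) (h : nat -> nat) :
  (forall x, x \in L -> 0 < h x) -> size L <= \sum_(x <- L) h x.
Proof.
elim: L => [|y L IH] H; rewrite ?big_nil ?big_cons //=.
have := H y (mem_head _ _); have := IH (fun x xl => H x (mem_behead (s := y :: L) xl)); lia.
Qed.

Lemma sum_eq_size (L : seq nat) (h : nat -> nat) :
  (forall x, x \in L -> 0 < h x) -> \sum_(x <- L) h x = size L ->
  forall x, x \in L -> h x = 1.
Proof.
elim: L => [|y L IH] H; rewrite ?big_nil ?big_cons //= => E x.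
have H' := fun x xl => H x (mem_behead (s := y :: L) xl).
have := H y (mem_head _ _); have := sum_ge_size H' => /= h1 h2.
rewrite inE => /orP [/eqP ->|xl]; first lia.
apply: IH xl => //; lia.
Qed.

Lemma size_le_sumn (l : seq nat) : (forall b, b \in l -> 0 < b) -> size l <= sumn l.
Proof.
elim: l => [|b l IH] H //=.
have := H b (mem_head _ _); have := IH (fun x xl => H x (mem_behead (s := b :: l) xl)); lia.
Qed.

Lemma le_sumn (l : seq nat) x : x \in l -> x <= sumn l.
Proof. move=> xl; rewrite (perm_sumn (perm_to_rem xl)) /=; lia. Qed.

Lemma count_sum (T : Type) (q : pred T) r : count q r = \sum_(x <- r) q x.
Proof. by rewrite -sum1_count big_mkcond /=; apply: eq_bigr => i _; case: (q i). Qed.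
Theorem mainTheorem3 (a : seq nat) (d : nat)
  (Hne : a != [::])
  (Hsort : sorted ltn a)
  (Hpos : 0 < head 0 a)
  (Hlast : last 0 a = d)
  (Hd : 1 <= d)
  (Hgcd : \big[gcdn/0]_(x <- a) x = 1) :
  graded (Ap1 a d) (le1 a) <->
  exists (N : nat) (c : nat -> nat),
    isMaxLevel a d N /\
    (forall s, s <= N -> has_card (Ap1s a d s) (c s)) /\
    \sum_(0 <= s < N.+1) c s = d.
Proof.
have da := d_in_a Hne Hlast.
have [L [UL [HL SL]]] := Ap_enum Hd da Hgcd.
pose p s x := if excluded_middle_informative (Ap1s a d s x) then true else false.
have pP s x : p s x <-> Ap1s a d s x by rewrite /p; case: excluded_middle_informative.
have lvL s x : Ap1s a d s x -> x \in L by move=> [/HL]. 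
have card s : has_card (Ap1s a d s) (count (p s) L).
  exists (filter (p s) L); split; first exact: filter_uniq.
  split; last by rewrite size_filter.
  move=> x; rewrite mem_filter; split.
    by move=> H; rewrite (lvL _ _ H) andbT; apply/pP.
  by move=> /andP [/pP].
pose h N x := count (fun s => p s x) (iota 0 N.+1).
have key N : \sum_(0 <= s < N.+1) count (p s) L = \sum_(x <- L) h N x.
  rewrite /h /index_iota subn0.
  under eq_bigr => s _ do rewrite count_sum.
  rewrite exchange_big; apply: eq_bigr => x _; by rewrite count_sum.
have lev0 : exists x, Ap1s a d 0 x.
  exists 0; split; last by exists [::].
  split; [exact: inS0 | lia].
have levB s : (exists x, Ap1s a d s x) -> s <= sumn L.
  move=> [x Hx]; apply: leq_trans (le_sumn (lvL _ _ Hx)).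
  case: Hx => _ [l [<- [Hl <-]]]; apply: size_le_sumn => b /Hl [[_ []]] //.
have hge N x : isMaxLevel a d N -> x \in L -> 0 < h N x.
  move=> [_ MN] /HL Ax; have [l [Hl El]] := Ap_level Ax.
  have Hs : Ap1s a d (size l) x by split => //; exists l.
  rewrite /h -has_count; apply/hasP; exists (size l); last exact/pP.
  by rewrite mem_iota /= add0n ltnS; apply: MN; exists x.
split.
  move=> Hgr; have U := graded_unique Hgr.
  pose P s := if excluded_middle_informative (exists x, Ap1s a d s x) then true else false.
  have PP s : P s <-> exists x, Ap1s a d s x by rewrite /P; case: excluded_middle_informative.
  have exP : exists s, P s by exists 0; apply/PP.
  have ubP : forall s, P s -> s <= sumn L by move=> s /PP; exact: levB.
  case: (ex_maxnP exP ubP) => N /PP HN maxN.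
  have MN : isMaxLevel a d N by split => // s /PP /maxN.
  exists N, (fun s => count (p s) L); split => //; split => //.
  rewrite key -SL -sum1_size big_seq_cond [RHS]big_seq_cond; apply: eq_bigr => x /andP [xL _].
  have /HL Ax := xL; have [l [Hl El]] := Ap_level Ax.
  have Hs : Ap1s a d (size l) x by split => //; exists l.
  rewrite /h (@eq_in_count _ _ (pred1 (size l))); last first.
    move=> s _ /=; apply/idP/eqP; first by move/pP => Hs'; exact: U Hs' Hs.
    by move=> ->; apply/pP.
  rewrite count_uniq_mem ?iota_uniq // mem_iota /= add0n ltnS.
  by case: MN => _ MN; rewrite MN //; exists x.
move=> [N [c [MN [Hc Hsum]]]]; apply: unique_graded.
have cE s : s <= N -> c s = count (p s) L.
  move=> sN; have [l [Ul [Hl Sl]]] := Hc s sN; have [l' [Ul' [Hl' Sl']]] := card s.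
  rewrite -Sl -Sl'; apply: perm_size; apply: uniq_perm => // x.
  by apply/idP/idP => [/(Hl x).2 /(Hl' x).1 | /(Hl' x).2 /(Hl x).1].
have Hsum' : \sum_(x <- L) h N x = size L.
  rewrite SL -key -Hsum; apply: eq_big_nat => s /andP [_ sN]; rewrite cE //.
have h1 := sum_eq_size (fun x xl => hge N x MN xl) Hsum'.
move=> x s t Hs Ht; apply/eqP; apply: contraT => st.
have xL := lvL _ _ Hs.
case: MN => _ MN.
have sN : s <= N by apply: MN; exists x.
have tN : t <= N by apply: MN; exists x.
have := h1 x xL; rewrite /h -size_filter => E.
have : size [:: s; t] <= size (filter (fun s => p s x) (iota 0 N.+1)).
  apply: uniq_leq_size; first by rewrite /= inE st.
  move=> z; rewrite !inE mem_filter mem_iota /= add0n => /orP [] /eqP ->.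
    by rewrite ltnS sN andbT; apply/pP.
  by rewrite ltnS tN andbT; apply/pP.
by rewrite E.
Qed.
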